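(* Every $r$-graph whose underlying simple graph is the Wagner graph $V_8$ is of class $1$, i.e., its edge-chromatic number equals $r$.
   Context: Graphs may have parallel edges but no loops. An $r$-graph is an $r$-regular graph $G$ such that for every $X\subseteq V(G)$ of odd cardinality, at least $r$ edges have exactly one end in $X$. A graph is class $1$ if its edge-chromatic number (minimum number of colors in a proper edge-coloring) equals its maximum degree. The Wagner graph $V_8$ is the cubic graph obtained from a cycle $v_0v_1\cdots v_7v_0$ by adding the edges $v_iv_{i+4}$ for $i=0,1,2,3$. *)

(* Defs.v *)
From mathcomp Require Import all_boot.
Set Implicit Arguments. Unset Strict Implicit. Unset Printing Implicit Defensive.

(* A finite multigraph: finite vertex type, finite edge type, and for each
   edge its (unordered) pair of endpoints, given as an ordered pair.
   Parallel edges = distinct edges with the same endpoints. *)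
Record multigraph := Multigraph {
  vtx : finType;
  edg : finType;
  ends : edg -> vtx * vtx }.

Section Multigraph.
Variable G : multigraph.

Definition loopless : Prop := forall e : edg G, (ends e).1 != (ends e).2.

Definition incident (e : edg G) (v : vtx G) : bool :=
  (v == (ends e).1) || (v == (ends e).2).

Definition deg (v : vtx G) : nat := #|[set e : edg G | incident e v]|.

Definition max_deg : nat := \max_(v : vtx G) deg v.

Definition regular (r : nat) : Prop := forall v : vtx G, deg v = r.

Definition cut (X : {set vtx G}) : {set edg G} :=
  [set e : edg G | ((ends e).1 \in X) (+) ((ends e).2 \in X)].

Definition r_graph (r : nat) : Prop :=
  regular r /\ forall X : {set vtx G}, odd #|X| -> r <= #|cut X|.

Definition proper_edge_coloring (k : nat) (c : edg G -> 'I_k) : Prop :=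
  forall e e' : edg G, e != e' ->
    (exists v : vtx G, incident e v && incident e' v) -> c e != c e'.

Definition edge_colorable (k : nat) : Prop :=
  exists c : edg G -> 'I_k, proper_edge_coloring c.

Definition edge_chromatic_number_is (k : nat) : Prop :=
  edge_colorable k /\ forall k', edge_colorable k' -> k <= k'.

Definition class1 : Prop := edge_chromatic_number_is max_deg.

Definition adj (u v : vtx G) : bool :=
  [exists e : edg G, (ends e == (u, v)) || (ends e == (v, u))].

End Multigraph.

(* Wagner graph V_8 on 'I_8: cycle v0..v7 plus chords v_i v_{i+4}. *)
Definition wagner_adj (i j : 'I_8) : bool :=
  let d := (i + 8 - j) %% 8 in [|| d == 1, d == 7 | d == 4].

Definition underlying_is_wagner (G : multigraph) : Prop :=
  exists f : 'I_8 -> vtx G,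
    bijective f /\ forall i j : 'I_8, adj (f i) (f j) = wagner_adj i j.

(* Main.v *)
Require Import Defs.
From mathcomp Require Import all_boot.
From mathcomp Require Import zify.

Definition tyw (u w : nat) : nat :=
  if w == (u+1) %% 8 then u else if u == (w+1) %% 8 then w else 8 + u %% 4.
Definition Lv (v : nat) : seq nat :=
  match v with 0 => [:: 7; 0; 8] | 1 => [:: 0; 1; 9] | 2 => [:: 1; 2; 10]
  | 3 => [:: 2; 3; 11] | 4 => [:: 3; 4; 8] | 5 => [:: 4; 5; 9]
  | 6 => [:: 5; 6; 10] | _ => [:: 6; 7; 11] end.
Definition lo (cnt : nat -> nat) (r t : nat) : nat :=
  match t with 0 | 2 | 4 | 6 => 0 | 1 | 3 | 5 | 7 => r - cnt t
  | 8 | 9 => cnt 0 | _ => cnt 2 end.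
Definition wa (i j : nat) : bool :=
  let d := (i + 8 - j) %% 8 in [|| d == 1, d == 7 | d == 4].

Lemma tyw_ok_nat : all (fun u => all (fun w => all (fun v =>
   wa u w ==> (((v == u) || (v == w)) == (tyw u w \in Lv v))) (iota 0 8)) (iota 0 8)) (iota 0 8).
Proof. by vm_compute. Qed.

Lemma tyw_ok (u w v : 'I_8) : wagner_adj u w ->
  ((v == u) || (v == w)) = (tyw u w \in Lv v).
Proof.
move=> h.
have := tyw_ok_nat; move/allP/(_ u); rewrite mem_iota ltn_ord => /(_ isT).
move/allP/(_ w); rewrite mem_iota ltn_ord => /(_ isT).
move/allP/(_ v); rewrite mem_iota ltn_ord => /(_ isT).
have -> : wa u w = wagner_adj u w by [].
by rewrite h /= => /eqP.
Qed.

Lemma Lv_uniq (v : 'I_8) : uniq (Lv v).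
Proof. by case: v => [[|[|[|[|[|[|[|[|//]]]]]]]] ?]. Qed.

Lemma card_types (T : finType) (h : T -> nat) (L : seq nat) : uniq L ->
  #|[set e | h e \in L]| = \sum_(t <- L) #|[set e | h e == t]|.
Proof.
elim: L => [|t L IH] /=.
  move=> _; rewrite big_nil; apply/eqP; rewrite cards_eq0; apply/eqP/setP => e.
  by rewrite !inE.
move/andP => [tL uL]; rewrite big_cons -IH //.
have -> : [set e | h e \in t :: L] = [set e | h e == t] :|: [set e | h e \in L].
  by apply/setP => e; rewrite !inE.
rewrite -cardsUI.
have -> : [set e | h e == t] :&: [set e | h e \in L] = set0.
  apply/setP => e; rewrite !inE; apply/negP => /andP [/eqP -> ht].
  by rewrite ht in tL.
by rewrite cards0 addn0.
Qed.

Lemma arith (cnt : nat -> nat) r :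
  (forall v, v < 8 -> \sum_(t <- Lv v) cnt t = r) ->
  forall v, v < 8 ->
  (forall t, t \in Lv v -> lo cnt r t + cnt t <= r) /\
  (forall t t', t \in Lv v -> t' \in Lv v -> t != t' ->
     lo cnt r t + cnt t <= lo cnt r t' \/ lo cnt r t' + cnt t' <= lo cnt r t).
Proof.
move=> H.
have H0 := H 0 isT. have H1 := H 1 isT. have H2 := H 2 isT. have H3 := H 3 isT.
have H4 := H 4 isT. have H5 := H 5 isT. have H6 := H 6 isT. have H7 := H 7 isT.
rewrite /Lv /= !big_cons big_nil /= in H0 H1 H2 H3 H4 H5 H6 H7.
move=> v; case: v => [|[|[|[|[|[|[|[|//]]]]]]]] _; rewrite /Lv /=;
  (split; [move=> t; rewrite !inE => /or3P [] /eqP -> ; rewrite /lo /=; lia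
          | move=> t t'; rewrite !inE => /or3P [] /eqP -> /or3P [] /eqP -> //= _;
            rewrite /lo /=; lia]).
Qed.

Theorem corollary2p8 (G : multigraph) (r : nat) :
  loopless G -> r_graph G r -> underlying_is_wagner G ->
  class1 G /\ edge_chromatic_number_is G r.
Proof.
move=> Hloop [Hreg _] [f [Hbij Hadj]].
case: Hbij => g fK gK.
pose eu := fun e : edg G => g (ends e).1.
pose ev := fun e : edg G => g (ends e).2.
have Hinc : forall e v, incident e (f v) = (v == eu e) || (v == ev e).
  move=> e v; rewrite /incident.
  have -> : (ends e).1 = f (eu e) by rewrite /eu gK.
  have -> : (ends e).2 = f (ev e) by rewrite /ev gK.
  by rewrite !(inj_eq (can_inj fK)).
have Hw : forall e, wagner_adj (eu e) (ev e).
  move=> e; rewrite -Hadj; apply/existsP; exists e; rewrite /eu /ev !gK.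
  by apply/orP; left; apply/eqP; case: (ends e).
pose ty := fun e => tyw (eu e) (ev e).
pose cnt := fun t => #|[set e | ty e == t]|.
have Hdeg : forall v : 'I_8, \sum_(t <- Lv v) cnt t = r.
  move=> v; rewrite -(Hreg (f v)) /deg -card_types ?Lv_uniq //.
  apply: eq_card => e; rewrite !inE Hinc tyw_ok //.
have Ar := @arith cnt r (fun v hv => Hdeg (Ordinal hv)).
pose idx := fun e => index e (enum [set e' | ty e' == ty e]).
have Hidx : forall e, idx e < cnt (ty e).
  by move=> e; rewrite /idx /cnt cardE index_mem mem_enum inE eqxx.
have Hidxinj : forall e e', ty e = ty e' -> idx e = idx e' -> e = e'.
  move=> e e' Ht; rewrite /idx Ht => Hi.
  have he : e \in enum [set e'0 | ty e'0 == ty e'] by rewrite mem_enum inE Ht.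
  have he' : e' \in enum [set e'0 | ty e'0 == ty e'] by rewrite mem_enum inE.
  by rewrite -(nth_index e he) Hi (nth_index e he').
have HinL : forall e v, incident e (f v) -> ty e \in Lv v.
  by move=> e v; rewrite Hinc /ty -tyw_ok.
have Hb : forall e, lo cnt r (ty e) + idx e < r.
  move=> e.
  have h : ty e \in Lv (eu e) by apply: HinL; rewrite Hinc eqxx.
  have := (Ar (eu e) (ltn_ord _)).1 _ h.
  have := Hidx e; lia.
have Hmax : max_deg G = r.
  rewrite /max_deg; apply/eqP; rewrite eqn_leq; apply/andP; split.
    by apply/bigmax_leqP => v _; rewrite Hreg.
  by rewrite -(Hreg (f ord0)) (leq_bigmax (f ord0)).
have Hecn : edge_chromatic_number_is G r.
  split.
    exists (fun e => Ordinal (Hb e)).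
    move=> e e' hne [x /andP [h1 h2]].
    rewrite -(gK x) in h1 h2.
    have t1 := HinL _ _ h1. have t2 := HinL _ _ h2.
    apply/negP => /eqP [] H.
    case: (ty e =P ty e') => Ht.
      move: H; rewrite Ht => /addnI Hi.
      by move: hne; rewrite (Hidxinj _ _ Ht Hi) eqxx.
    have := (Ar (g x) (ltn_ord _)).2 _ _ t1 t2 (introN eqP Ht).
    have := Hidx e; have := Hidx e'; lia.
  move=> k [c Hc].
  pose S := [set e | incident e (f ord0)].
  have HS : #|S| = r by rewrite -(Hreg (f ord0)).
  rewrite -HS -(card_in_imset (f := c)).
    by apply: leq_trans (max_card _) _; rewrite card_ord.
  move=> e e'; rewrite !inE => h1 h2 hc; apply/eqP; apply/negPn/negP => hne.
  have Hx : exists v, incident e v && incident e' v.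
    by exists (f ord0); rewrite h1 h2.
  by move: (Hc e e' hne Hx); rewrite hc eqxx.
unfold class1; rewrite Hmax; by split.
Qed.
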